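(* Let $Y$ be a real Banach space and $M$ a complete pointed metric space containing a pairly distanced sequence. Then $\mathrm{A}(M,Y)=\mathrm{Lip}_0(M,Y)$ if and only if $Y$ is finite-dimensional.
   Context: Throughout, metric spaces are complete and pointed, with base point $0$. $\mathrm{Lip}_0(M,Y)$ is the Banach space of Lipschitz maps $f:M\to Y$ with $f(0)=0$, normed by $\|f\|=\sup_{p\neq q}\|f(p)-f(q)\|/d(p,q)$. A map $f$ attains its norm toward $y\in Y$ if there is a sequence $(p_n,q_n)$ in $M\times M$ with $p_n\neq q_n$ such that $[f(p_n)-f(q_n)]/d(p_n,q_n)\to y$ and $\|y\|=\|f\|$; $\mathrm{A}(M,Y)$ is the set of $f$ attaining their norm toward some vector. A sequence $(x_n)$ of distinct points of $M$ is pairly distanced if there is a sequence $(r_n)\subseteq[0,1]$ such that for all $j\neq k$ in $\mathbb{N}$: (i) $d(x_{2j-1},x_{2k-1})\ge r_j d(x_{2j-1},x_{2j})+r_k d(x_{2k-1},x_{2k})$; (ii) $d(x_{2j-1},x_{2k})\ge r_j d(x_{2j-1},x_{2j})+(1-r_k)d(x_{2k-1},x_{2k})$; (iii) $d(x_{2j},x_{2k})\ge (1-r_j)d(x_{2j-1},x_{2j})+(1-r_k)d(x_{2k-1},x_{2k})$. *)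

(* Defs.v *)
From HB Require Import structures.
From mathcomp Require Import all_boot all_order all_algebra.
From mathcomp Require Import all_classical all_reals all_analysis.
Set Implicit Arguments. Unset Strict Implicit. Unset Printing Implicit Defensive.
Import Order.TTheory GRing.Theory Num.Theory.
Import numFieldNormedType.Exports.
Local Open Scope classical_set_scope.
Local Open Scope ring_scope.

Definition is_metric {R : realType} {M : Type} (d : M -> M -> R) : Prop :=
  (forall p q, 0 <= d p q) /\
  (forall p q, d p q = 0 <-> p = q) /\
  (forall p q, d p q = d q p) /\
  (forall p q s, d p s <= d p q + d q s).

Definition complete_metric {R : realType} {M : Type} (d : M -> M -> R) : Prop :=
  forall u : nat -> M,
    (forall e : R, 0 < e -> exists N : nat, forall m n : nat,
        (N <= m)%N -> (N <= n)%N -> d (u m) (u n) < e) ->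
    exists l : M, forall e : R, 0 < e -> exists N : nat, forall n : nat,
        (N <= n)%N -> d (u n) l < e.

Definition lipschitz {R : realType} {M : Type} {Y : normedModType R}
  (d : M -> M -> R) (f : M -> Y) : Prop :=
  exists C : R, forall p q, `|f p - f q| <= C * d p q.

Definition Lip0 {R : realType} {M : Type} {Y : normedModType R}
  (d : M -> M -> R) (x0 : M) (f : M -> Y) : Prop :=
  lipschitz d f /\ f x0 = 0.

Definition lipnorm {R : realType} {M : Type} {Y : normedModType R}
  (d : M -> M -> R) (f : M -> Y) : R :=
  sup [set t : R | exists p q : M, p <> q /\ t = `|f p - f q| / d p q].

Definition attains_norm_toward {R : realType} {M : Type} {Y : normedModType R}
  (d : M -> M -> R) (f : M -> Y) (y : Y) : Prop :=
  exists (p q : nat -> M),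
    (forall n, p n <> q n) /\
    ((fun n => (d (p n) (q n))^-1 *: (f (p n) - f (q n))) @ \oo --> y) /\
    `|y| = lipnorm d f.

Definition in_A {R : realType} {M : Type} {Y : normedModType R}
  (d : M -> M -> R) (f : M -> Y) : Prop :=
  exists y : Y, attains_norm_toward d f y.

(** Pairly distanced sequence. The paper's x_1, x_2, ... is [x 0, x 1, ...];
    the paper's pair (x_{2j-1}, x_{2j}), j >= 1, is (x (2j), x (2j+1)), j >= 0,
    and r_j is [r (j-1)]. *)
Definition pairly_distanced {R : realType} {M : Type} (d : M -> M -> R)
  (x : nat -> M) : Prop :=
  injective x /\
  exists r : nat -> R, (forall n, 0 <= r n <= 1) /\
    forall j k : nat, j <> k ->
      d (x j.*2) (x k.*2) >=
        r j * d (x j.*2) (x j.*2.+1) + r k * d (x k.*2) (x k.*2.+1) /\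
      d (x j.*2) (x k.*2.+1) >=
        r j * d (x j.*2) (x j.*2.+1) + (1 - r k) * d (x k.*2) (x k.*2.+1) /\
      d (x j.*2.+1) (x k.*2.+1) >=
        (1 - r j) * d (x j.*2) (x j.*2.+1) + (1 - r k) * d (x k.*2) (x k.*2.+1).

Definition finite_dim {R : realType} (Y : lmodType R) : Prop :=
  exists (n : nat) (e : 'I_n -> Y),
    forall y : Y, exists c : 'I_n -> R, y = \sum_(i < n) c i *: e i.

(* Main.v *)
Require Import Defs.
From HB Require Import structures.
From mathcomp Require Import all_boot all_order all_algebra.
From mathcomp Require Import all_classical all_reals all_analysis.
From mathcomp Require Import ring lra.
Import Order.TTheory GRing.Theory Num.Theory.
Import numFieldNormedType.Exports.
Local Open Scope ring_scope.
Local Open Scope classical_set_scope.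
Section Main.
Variables (R : realType) (Y : normedModType R).

Lemma cvgE_eps {V : normedModType R} (u : nat -> V) (l : V) :
  u @ \oo --> l <-> forall e : R, 0 < e -> exists N, forall n, (N <= n)%N -> `|l - u n| < e.
Proof.
rewrite cvgrPdist_lt; split => H e e0; have := H e e0.
  by case => N _ HN; exists N => n Hn; exact: HN.
by case => N HN; exists N => // n /= Hn; exact: HN.
Qed.

Lemma archi_inv (e : R) : 0 < e -> exists N : nat, forall n, (N <= n)%N -> (n.+1%:R)^-1 < e.
Proof.
move=> e0; have [N _ HN] := nbhs_infty_gtr (e^-1).
exists N => n Hn; have := HN n Hn => /= h.
rewrite -(invrK e) ltf_pV2 ?posrE ?invr_gt0 //.

by apply: (lt_trans h); rewrite ltr_nat.
Qed.

Lemma cvg_inv_bound (u : nat -> Y) (l : Y) :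
  (forall n, `|l - u n| <= (n.+1%:R)^-1) -> u @ \oo --> l.
Proof.
move=> H; apply/cvgE_eps => e e0; have [N HN] := @archi_inv e e0.
by exists N => n Hn; apply: le_lt_trans (H n) (HN n Hn).
Qed.

Lemma incr_ge (phi : nat -> nat) : (forall n, (phi n < phi n.+1)%N) -> forall n, (n <= phi n)%N.
Proof. move=> H; elim=> // n IH; exact: leq_ltn_trans IH (H n). Qed.

Lemma incr_mono (phi : nat -> nat) : (forall n, (phi n < phi n.+1)%N) ->
  forall n m, (n <= m)%N -> (phi n <= phi m)%N.
Proof.
move=> H n m /subnK <-; elim: (m - n)%N => // k IH.
by rewrite addSn; apply: leq_trans IH (ltnW (H _)).
Qed.

Lemma cvg_subseq {V : normedModType R} (u : nat -> V) (l : V) (phi : nat -> nat) :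
  (forall n, (phi n < phi n.+1)%N) -> u @ \oo --> l -> (fun n => u (phi n)) @ \oo --> l.
Proof.
move=> Hp /cvgE_eps H; apply/cvgE_eps => e e0; have [N HN] := H e e0.
exists N => n Hn; exact: (HN _ (leq_trans Hn (incr_ge _ Hp n))).
Qed.

Lemma incr_of_seq (phi : nat -> nat) : increasing_seq phi -> forall n, (phi n < phi n.+1)%N.
Proof. by move=> /increasing_seqP. Qed.

Lemma cvg_norm_le (u : nat -> Y) (l : Y) (B : R) : u @ \oo --> l -> (forall n, `|u n| <= B) -> `|l| <= B.
Proof.
move=> /cvgE_eps H HB; apply/ler_addgt0Pr => e e0; have [N HN] := H e e0.
have := HN N (leqnn N) => h.
have h2 : `|l| <= `|l - u N| + `|u N| by rewrite -{1}(subrK (u N) l); exact: ler_normD.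
apply: le_trans h2 _; rewrite addrC.
by apply: lerD; [exact: HB| exact: ltW].
Qed.

Lemma bnd_of (a : nat -> R) (K : R) : (forall n, `|a n| <= K) -> bounded_fun a.
Proof.
move=> H; exists K; split; first by rewrite num_real.
by move=> M HM n _ /=; apply: le_trans (H n) (ltW HM).
Qed.
Lemma bw (a : nat -> R) (K : R) : (forall n, `|a n| <= K) ->
  exists phi : nat -> nat, exists g : R, (forall n, (phi n < phi n.+1)%N) /\ (fun n => a (phi n)) @ \oo --> g.
Proof.
move=> /bnd_of /bolzano_weierstrass [f fi fc].
have [g Hg] := (cvg_ex _).1 fc.
exists f, g; split; last exact: Hg.
by move/increasing_seqP: fi.
Qed.

Definition span (e : nat -> Y) (J : nat) : set Y :=
  [set w | exists c : nat -> R, w = \sum_(i < J) c i *: e i].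

Lemma span_ext (e e' : nat -> Y) J :
  (forall i, (i < J)%N -> e i = e' i) -> forall w, span e J w -> span e' J w.
Proof.
move=> H w [c ->]; exists c; apply: eq_bigr => i _; by rewrite H.
Qed.

Section SpanE.
Variable e : nat -> Y.

Lemma span0 J : span e J 0.
Proof. by exists (fun=> 0); rewrite big1 // => i _; rewrite scale0r. Qed.

Lemma spanD J a b : span e J a -> span e J b -> span e J (a + b).
Proof.
move=> [c ->] [c' ->]; exists (fun i => c i + c' i).
by rewrite -big_split /=; apply: eq_bigr => i _; rewrite scalerDl.
Qed.

Lemma spanZ J k a : span e J a -> span e J (k *: a).
Proof.
move=> [c ->]; exists (fun i => k * c i).
by rewrite scaler_sumr; apply: eq_bigr => i _; rewrite scalerA.
Qed.

Lemma spanN J a : span e J a -> span e J (- a).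
Proof. by move=> h; rewrite -scaleN1r; exact: spanZ. Qed.

Lemma spanB J a b : span e J a -> span e J b -> span e J (a - b).
Proof. by move=> ha hb; apply: spanD => //; exact: spanN. Qed.

Lemma spanS J w a : span e J w -> span e J.+1 (w + a *: e J).
Proof.
move=> [c ->]; exists (fun i => if i == J then a else c i).
rewrite big_ord_recr /= eqxx; congr (_ + _).
by apply: eq_bigr => i _; rewrite ltn_eqF.
Qed.

Lemma span_dec J y : span e J.+1 y -> exists w a, span e J w /\ y = w + a *: e J.
Proof.
move=> [c ->]; exists (\sum_(i < J) c i *: e i), (c J); split; first by exists c.
by rewrite big_ord_recr.
Qed.

Lemma span_mono J J' w : (J <= J')%N -> span e J w -> span e J' w.
Proof.
move=> /subnK <-; elim: (J' - J)%N => // k IH /IH h.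
by rewrite addSn; have := spanS _ _ 0 h; rewrite scale0r addr0.
Qed.

Lemma span_el k J : (k < J)%N -> span e J (e k).
Proof.
move=> kJ; apply: (span_mono _ _ _ kJ).
by have := spanS _ _ 1 (span0 k); rewrite scale1r add0r.
Qed.

End SpanE.
Arguments span0 {e} J. Arguments spanD {e J a b}. Arguments spanZ {e J} k {a}.
Arguments spanN {e J a}. Arguments spanB {e J a b}. Arguments spanS {e J w} a.
Arguments span_dec {e J y}. Arguments span_mono {e J J' w}. Arguments span_el {e k J}.
Arguments cvg_norm_le {u l B}. Arguments cvg_subseq {V u l phi}. Arguments cvg_inv_bound {u l}.
Arguments bw {a K}. Arguments incr_mono {phi}. Arguments incr_ge {phi}.
Definition seqclosed (S : set Y) := forall (u : nat -> Y) (l : Y),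
  (forall n, S (u n)) -> u @ \oo --> l -> S l.
Definition seqcpt (S : set Y) := forall (u : nat -> Y) (B : R),
  (forall n, S (u n)) -> (forall n, `|u n| <= B) ->
  exists phi : nat -> nat, exists l : Y,
    (forall n, (phi n < phi n.+1)%N) /\ (fun n => u (phi n)) @ \oo --> l.

Lemma incr_strict (phi : nat -> nat) : (forall n, (phi n < phi n.+1)%N) ->
  forall n m, (n < m)%N -> (phi n < phi m)%N.
Proof. move=> H n m nm; exact: leq_trans (H n) (incr_mono H _ _ nm). Qed.

Lemma sep (S : set Y) x : seqclosed S -> ~ S x ->
  exists2 eps : R, 0 < eps & forall w, S w -> eps <= `|x - w|.
Proof.
move=> cS nSx; apply: contrapT => H.
have H' : forall n : nat, exists w, S w /\ `|x - w| < (n.+1%:R)^-1.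
  move=> n; apply: contrapT => Hn; apply: H; exists (n.+1%:R)^-1.
    by rewrite invr_gt0 ltr0n.
  move=> w Sw; rewrite leNgt; apply/negP => lt; apply: Hn; by exists w.
have [w Hw] := choice H'; apply: nSx; apply: (cS w) => [n|]; first exact: (Hw n).1.
by apply: cvg_inv_bound => n; exact: ltW (Hw n).2.
Qed.

Lemma lbZ (S : set Y) (v : Y) eps : (forall w a, S w -> S (a *: w)) ->
  (forall w, S w -> eps <= `|v - w|) ->
  forall w a, S w -> `|a| * eps <= `|w + a *: v|.
Proof.
move=> SZ H w a Sw; have [->|a0] := eqVneq a 0.
  by rewrite normr0 mul0r normr_ge0.
have -> : w + a *: v = a *: (v - ((- a^-1) *: w)).
  by rewrite scalerBr scalerA mulrN mulfV // scaleN1r opprK addrC.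
rewrite normrZ; apply: ler_wpM2l => //; apply: H; exact: SZ.
Qed.

Arguments sep {S x}. Arguments lbZ {S v eps}. Arguments incr_strict {phi}.
Section SpanClosed.
Variable e : nat -> Y.

Lemma decomp J (u : nat -> Y) : (forall n, span e J.+1 (u n)) ->
  exists W : nat -> Y, exists A : nat -> R,
    forall n, span e J (W n) /\ u n = W n + A n *: e J.
Proof.
move=> Hu.
have /choice [wa Hwa] : forall n, exists p : Y * R, span e J p.1 /\ u n = p.1 + p.2 *: e J.
  move=> n; have [w [a [h1 h2]]] := span_dec (Hu n); by exists (w, a).
by exists (fun n => (wa n).1), (fun n => (wa n).2).
Qed.

Lemma span_good J : seqclosed (span e J) /\ seqcpt (span e J).
Proof.
elim: J => [|J [cJ kJ]].
  have u0 : forall y, span e 0 y -> y = 0 by move=> y [c ->]; rewrite big_ord0.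
  split.
    move=> u l Hu Hl.
    have : `|l| <= 0 by apply: (cvg_norm_le Hl) => n; rewrite (u0 _ (Hu n)) normr0.
    by rewrite normr_le0 => /eqP ->; exact: span0.
  move=> u B Hu _; exists id, 0; split => //.
  by apply/cvgE_eps => eps e0; exists 0%N => n _; rewrite (u0 _ (Hu n)) subrr normr0.
have [inS|ninS] := pselect (span e J (e J)).
  have sub : forall y, span e J.+1 y -> span e J y.
    move=> y /span_dec [w [a [Sw ->]]]; apply: spanD => //; exact: spanZ.
  have sup : forall y, span e J y -> span e J.+1 y := fun y => span_mono (leqnSn J).
  split.
    move=> u l Hu Hl; apply: sup; apply: (cJ u) => // n; exact: sub.
  move=> u B Hu HB; apply: (kJ u B) => // n; exact: sub.
have [eps e0 Heps] := sep cJ ninS.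
have lb := lbZ (fun w a h => spanZ a h) Heps.
have Abnd : forall (u : nat -> Y) (W : nat -> Y) (A : nat -> R) (B : R),
    (forall n, span e J (W n) /\ u n = W n + A n *: e J) ->
    (forall n, `|u n| <= B) -> forall n, `|A n| <= B / eps.
  move=> u W A B HW HB n; rewrite ler_pdivlMr //; apply: le_trans (HB n).
  by rewrite (HW n).2; apply: lb; exact: (HW n).1.
have Wbnd : forall (u : nat -> Y) (W : nat -> Y) (A : nat -> R) (B C : R),
    (forall n, span e J (W n) /\ u n = W n + A n *: e J) ->
    (forall n, `|u n| <= B) -> (forall n, `|A n| <= C) ->
    forall n, `|W n| <= B + C * `|e J|.
  move=> u W A B C HW HB HA n.
  have -> : W n = u n - A n *: e J by rewrite (HW n).2 addrK.
  apply: le_trans (ler_normB _ _) _; apply: lerD => //.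
  by rewrite normrZ; apply: ler_wpM2r => //.
split.
  move=> u l Hu Hl.
  have [N HN] := (cvgE_eps u l).1 Hl 1 ltr01.
  pose v n := u (n + N)%N.
  have Hv : (fun n => v n) @ \oo --> l.
    by apply: (cvg_subseq (phi := fun n => (n + N)%N)) => // n; rewrite addSn.
  have vB : forall n, `|v n| <= `|l| + 1.
    move=> n; have h := HN (n + N)%N (leq_addl _ _).
    have -> : v n = l - (l - v n) by rewrite opprB addrC subrK.
    by apply: le_trans (ler_normB _ _) _; apply: lerD => //; exact: ltW.
  have [W [A HW]] := @decomp J v (fun n => Hu (n + N)%N).
  have HA := Abnd _ _ _ _ HW vB.
  have [phi [g [Hphi Hg]]] := bw HA.
  have HWc : (fun n => W (phi n)) @ \oo --> l - g *: e J.
    have -> : (fun n => W (phi n)) = (fun n => v (phi n) - A (phi n) *: e J).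
      by apply/funext => n; rewrite (HW (phi n)).2 addrK.
    apply: cvgB; first exact: cvg_subseq.
    by apply: cvgZ => //; exact: cvg_cst.
  have SJ := cJ _ _ (fun n => (HW (phi n)).1) HWc.
  by have := spanS (g) SJ; rewrite subrK.
move=> u B Hu HB.
have [W [A HW]] := @decomp J u Hu.
have HA := Abnd _ _ _ _ HW HB.
have [phi [g [Hphi Hg]]] := bw HA.
have HWb := Wbnd _ _ _ _ _ HW HB HA.
have [psi [l [Hpsi Hl]]] := kJ (fun n => W (phi n)) _ (fun n => (HW (phi n)).1) (fun n => HWb (phi n)).
exists (fun n => phi (psi n)), (l + g *: e J); split.
  by move=> n; apply: incr_strict.
have -> : (fun n => u (phi (psi n))) = (fun n => W (phi (psi n)) + A (phi (psi n)) *: e J).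
  by apply/funext => n; rewrite (HW _).2.
apply: cvgD; first exact: Hl.
apply: cvgZ; last exact: cvg_cst.
exact: (cvg_subseq (u := fun n => A (phi n)) Hpsi Hg).
Qed.

End SpanClosed.
Arguments span_good : clear implicits.

Lemma notfd_span (e : nat -> Y) J : ~ finite_dim Y -> exists x, ~ span e J x.
Proof.
move=> nfd; apply: contrapT => H; apply: nfd.
exists J, (fun i : 'I_J => e i) => y.
have : span e J y by apply: contrapT => Hy; apply: H; exists y.
by case=> c ->; exists (fun i : 'I_J => c i).
Qed.

Lemma riesz_step (e : nat -> Y) J : ~ finite_dim Y ->
  exists v : Y, `|v| = 1 /\ forall a w, span e J w -> `|a| <= 2 * `|a *: v + w|.
Proof.
move=> nfd; have [x nx] := notfd_span e J nfd.
have [eps e0 Heps] := sep (span_good e J).1 nx.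
pose D := [set t | exists w, span e J w /\ t = `|x - w|].
have D0 : D `|x - 0| by exists 0; split => //; exact: span0.
have Dlb : lbound D eps by move=> t [w [Sw ->]]; exact: Heps.
have epsd : eps <= inf D by apply: lb_le_inf => //; exists `|x - 0|.
have dpos : 0 < inf D by apply: lt_le_trans epsd.
have hinf : has_inf D by split; [exists `|x - 0| | exists eps].
have [t [w0 [Sw0 ->]] tlt] := inf_adherent dpos hinf.
set n := `|x - w0| in tlt *.
have npos : 0 < n by apply: lt_le_trans e0 (Heps _ Sw0).
pose v := n^-1 *: (x - w0).
exists v; split.
  by rewrite /v normrZ ger0_norm ?mulVf ?gt_eqF // invr_ge0 ltW.
have half : forall w, span e J w -> 2^-1 <= `|v - w|.
  move=> w Sw.
  have -> : v - w = n^-1 *: (x - (w0 + n *: w)).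
    by rewrite /v opprD addrA [RHS]scalerBr scalerA mulVf ?gt_eqF // scale1r.
  rewrite normrZ ger0_norm; last by rewrite invr_ge0 ltW.
  have h1 : inf D <= `|x - (w0 + n *: w)|.
    apply: ge_inf; first by exists eps.
    by exists (w0 + n *: w); split => //; apply: spanD => //; exact: spanZ.
  rewrite mulrC ler_pdivlMr //; move: tlt h1; lra.
move=> a w Sw; rewrite addrC -ler_pdivrMl // mulrC.
exact: (lbZ (fun w a h => spanZ a h) half).
Qed.

Lemma riesz_seq : ~ finite_dim Y ->
  exists e : nat -> Y, (forall n, `|e n| = 1) /\
    forall J a w, span e J w -> `|a| <= 2 * `|a *: e J + w|.
Proof.
move=> nfd.
have /choice [G HG] : forall p : nat * (nat -> Y), exists v : Y, `|v| = 1 /\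
    forall a w, span p.2 p.1 w -> `|a| <= 2 * `|a *: v + w|.
  by move=> [J e]; exact: riesz_step.
pose s := fix s n := if n is m.+1 then rcons (s m) (G (m, fun i => nth 0 (s m) i)) else [::].
have ss : forall n, size (s n) = n by elim=> //= n IH; rewrite size_rcons IH.
pose e i := nth 0 (s i.+1) i.
have ns : forall n i, (i < n)%N -> nth 0 (s n) i = e i.
  elim=> // n IH i; rewrite ltnS leq_eqVlt => /orP [/eqP ->|lt].
    by [].
  by rewrite /= nth_rcons ss lt IH.
have eG : forall n, e n = G (n, fun i => nth 0 (s n) i).
  by move=> n; rewrite /e /= nth_rcons ss ltnn eqxx.
exists e; split.
  by move=> n; rewrite eG; exact: (HG _).1.
move=> J a w Sw; rewrite eG; apply: (HG (J, _)).2 => /=.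
by apply: (span_ext e) Sw => i iJ; rewrite ns.
Qed.
Lemma fd_attain (M : Type) (d : M -> M -> R) (f : M -> Y) :
  is_metric d -> (exists p q : M, p <> q) -> finite_dim Y -> Defs.lipschitz d f -> in_A d f.
Proof.
move=> [d0 [dE [dC dT]]] [p0 [q0 pq0]] [n [e0 He0]] [C HC].
pose e k := oapp e0 0 (insub k : option 'I_n).
have Sall : forall y, span e n y.
  move=> y; have [c ->] := He0 y.
  exists (fun k => oapp c 0 (insub k : option 'I_n)).
  by apply: eq_bigr => i _; rewrite /e valK.
have dpos : forall p q, p <> q -> 0 < d p q.
  move=> p q pq; rewrite lt_neqAle d0 andbT eq_sym; apply/negP => /eqP /dE //.
pose Qs := [set t : R | exists p q : M, p <> q /\ t = `|f p - f q| / d p q].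
have Qub : forall t, Qs t -> t <= C.
  move=> t [p [q [pq ->]]]; rewrite ler_pdivrMr ?dpos //; exact: HC.
have hs : has_sup Qs by split; [exists (`|f p0 - f q0| / d p0 q0); exists p0, q0 | exists C].
have QL : forall t, Qs t -> t <= sup Qs by move=> t Qt; apply: ub_le_sup => //; exact: hs.2.
have /choice [pq Hpq] : forall k : nat, exists pq : M * M, pq.1 <> pq.2 /\
    sup Qs - (k.+1%:R)^-1 < `|f pq.1 - f pq.2| / d pq.1 pq.2.
  move=> k; have kp : 0 < (k.+1%:R : R)^-1 by rewrite invr_gt0 ltr0Sn.
  have [t [p [q [pq ->]]] lt] := @sup_adherent R Qs _ kp hs.
  by exists (p, q).
pose z k := (d (pq k).1 (pq k).2)^-1 *: (f (pq k).1 - f (pq k).2).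
have zn : forall k, `|z k| = `|f (pq k).1 - f (pq k).2| / d (pq k).1 (pq k).2.
  move=> k; rewrite /z normrZ ger0_norm; first by rewrite mulrC.
  by rewrite invr_ge0 ltW // dpos //; exact: (Hpq k).1.
have zQ : forall k, Qs `|z k| by move=> k; rewrite zn; exists (pq k).1, (pq k).2; split => //; exact: (Hpq k).1.
have [phi [y [Hphi Hy]]] := (span_good e n).2 z (sup Qs) (fun k => Sall _) (fun k => QL _ (zQ k)).
exists y, (fun k => (pq (phi k)).1), (fun k => (pq (phi k)).2); split; first by move=> k; exact: (Hpq _).1.
split; first exact: Hy.
apply/eqP; rewrite eq_le; apply/andP; split.
  by apply: (cvg_norm_le Hy) => k; exact: QL.
apply/ler_addgt0Pr => eps epos.
have e2 : 0 < eps / 2 by rewrite divr_gt0.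
have [N1 HN1] := (cvgE_eps _ _).1 Hy _ e2.
have [N2 HN2] := @archi_inv _ e2.
pose k := maxn N1 N2.
have h1 := HN1 k (leq_maxl _ _).
have h2 : ((phi k).+1%:R)^-1 < eps / 2.
  by apply: HN2; apply: leq_trans (leq_maxr N1 N2) (incr_ge Hphi k).
have h3 := (Hpq (phi k)).2; rewrite -zn in h3.
have h4 : `|z (phi k)| <= `|y| + `|y - z (phi k)|.
  by have := ler_normB y (y - z (phi k)); rewrite subKr.
change (sup Qs <= `|y| + eps).
move: h1 h2 h3 h4; set a := `|y - z (phi k)|; set b := ((phi k).+1%:R)^-1; set c := `|z (phi k)|.
set L := sup Qs; set ny := `|y|; move=> h1 h2 h3 h4.
clearbody a b c L ny.
lra.
Qed.
Section Construction.
Variables (M : Type) (d : M -> M -> R) (x : nat -> M) (r : nat -> R) (e : nat -> Y).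
Hypothesis hd : is_metric d.
Hypothesis hinj : injective x.
Hypothesis hr : forall n, 0 <= r n <= 1.
Hypothesis hpd : forall j k : nat, j <> k ->
      d (x j.*2) (x k.*2) >=
        r j * d (x j.*2) (x j.*2.+1) + r k * d (x k.*2) (x k.*2.+1) /\
      d (x j.*2) (x k.*2.+1) >=
        r j * d (x j.*2) (x j.*2.+1) + (1 - r k) * d (x k.*2) (x k.*2.+1) /\
      d (x j.*2.+1) (x k.*2.+1) >=
        (1 - r j) * d (x j.*2) (x j.*2.+1) + (1 - r k) * d (x k.*2) (x k.*2.+1).
Hypothesis he1 : forall n, `|e n| = 1.
Hypothesis heR : forall J a w, span e J w -> `|a| <= 2 * `|a *: e J + w|.

Lemma d0 p q : 0 <= d p q. Proof. exact: hd.1. Qed.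
Lemma dC p q : d p q = d q p. Proof. exact: hd.2.2.1. Qed.
Lemma dT p q s : d p s <= d p q + d q s. Proof. exact: hd.2.2.2. Qed.
Lemma dpp p : d p p = 0. Proof. exact: (hd.2.1 p p).2. Qed.
Lemma dpos p q : p <> q -> 0 < d p q.
Proof. move=> pq; rewrite lt_neqAle d0 andbT eq_sym; apply/negP => /eqP /(hd.2.1) //. Qed.

Definition dd j := d (x j.*2) (x j.*2.+1).
Lemma dd_pos j : 0 < dd j.
Proof.
apply: dpos => /hinj /eqP; rewrite -addn1 -{1}(addn0 j.*2) eqn_add2l //.
Qed.

Definition rad m := if odd m then (1 - r m./2) * dd m./2 else r m./2 * dd m./2.
Lemma rad_e j : rad j.*2 = r j * dd j.
Proof. by rewrite /rad odd_double half_double. Qed.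
Lemma rad_o j : rad j.*2.+1 = (1 - r j) * dd j.
Proof. by rewrite /rad /= odd_double uphalf_double. Qed.
Lemma md m : m = (m./2).*2 \/ m = (m./2).*2.+1.
Proof. by rewrite -{1 3}(odd_double_half m); case: (odd m); [right|left]. Qed.
Lemma rad_ge0 m : 0 <= rad m.
Proof.
have := dd_pos m./2; have := hr m./2; rewrite /rad; case: (odd m) => /andP [h1 h2] h3.
  by apply: mulr_ge0 => //; [rewrite subr_ge0|exact: ltW].
by apply: mulr_ge0 => //; exact: ltW.
Qed.

Lemma sep_eo j k : rad j.*2 + rad k.*2.+1 <= d (x j.*2) (x k.*2.+1).
Proof.
rewrite rad_e rad_o; have [->|jk] := eqVneq j k.
  by rewrite -mulrDl addrCA subrr addr0 mul1r.
by have [_ [h _]] := hpd _ _ (elimN eqP jk); exact: h.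
Qed.

Lemma rsep m m' : m <> m' -> rad m + rad m' <= d (x m) (x m').
Proof.
move=> mm'; have [h1|h1] := md m; have [h2|h2] := md m'; rewrite h1 h2 in mm' *.
- have jk : m./2 <> m'./2 by move=> h; apply: mm'; rewrite h.
  by have [h _] := hpd _ _ jk; rewrite !rad_e; exact: h.
- exact: sep_eo.
- by rewrite addrC dC; exact: sep_eo.
- have jk : m./2 <> m'./2 by move=> h; apply: mm'; rewrite h.
  by have [_ [_ h]] := hpd _ _ jk; rewrite !rad_o; exact: h.
Qed.

Definition tent m p := Num.max 0 (rad m - d p (x m)).
Lemma tent_ge0 m p : 0 <= tent m p.
Proof. by rewrite /tent le_max lexx. Qed.
Lemma tent_pos m p : 0 < tent m p -> tent m p = rad m - d p (x m).
Proof. by rewrite /tent maxEle; case: ifP => // _; rewrite ltxx. Qed.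

Lemma maxlip (a s t : R) : `|Num.max 0 (a - s) - Num.max 0 (a - t)| <= `|s - t|.
Proof.
have h1 := ler_norm (s - t); have h2 := ler_norm (t - s); rewrite distrC in h2.
rewrite ler_norml !maxEle; case: ifP => H1; case: ifP => H2; move: H1 H2 h1 h2;
  set u := `|s - t|; clearbody u; move=> /idP H1 /idP H2 h1 h2; try (move/negP: H1 => H1);
  try (move/negP: H2 => H2); rewrite ?ltNge in H1 H2 *; apply/andP; split; lra.
Qed.

Lemma tent_lip m p q : `|tent m p - tent m q| <= d p q.
Proof.
apply: le_trans (maxlip _ _ _) _; rewrite ler_norml.
have := dT p q (x m); have := dT q p (x m); rewrite (dC q p) => h1 h2.
by apply/andP; split; lra.
Qed.

Lemma tent_disj m m' p q : m <> m' -> 0 < tent m p -> 0 < tent m' q ->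
  tent m p + tent m' q <= d p q.
Proof.
move=> mm' h1 h2; rewrite (tent_pos _ _ h1) (tent_pos _ _ h2).
have := rsep _ _ mm'; have := dT (x m) p (x m'); have := dT p q (x m').
rewrite (dC (x m) p) (dC q (x m')); lra.
Qed.

Lemma tent_unique m m' p : m <> m' -> 0 < tent m p -> tent m' p = 0.
Proof.
move=> mm' h1; apply/eqP; rewrite eq_le tent_ge0 andbT leNgt; apply/negP => h2.
by have := tent_disj _ _ _ _ mm' h1 h2; rewrite dpp; have := tent_ge0 m' p; lra.
Qed.

Lemma tent_center m m' : m <> m' -> tent m' (x m) = 0.
Proof.
move=> mm'; apply/eqP; rewrite eq_le tent_ge0 andbT leNgt; apply/negP => h.
have := tent_pos _ _ h; have := rsep _ _ mm'; have := rad_ge0 m; rewrite dC; lra.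
Qed.

Lemma tent_self m : tent m (x m) = rad m.
Proof. by rewrite /tent dpp subr0 maxEle rad_ge0. Qed.

Definition aa (j : nat) : R := 1 - (j.+1%:R)^-1.
Lemma inv_pos j : 0 < (j.+1%:R : R)^-1. Proof. by rewrite invr_gt0 ltr0n. Qed.
Lemma inv_le1 j : (j.+1%:R : R)^-1 <= 1. Proof. by rewrite invf_le1 ?ltr0n // ler1n. Qed.
Lemma aa_ge0 j : 0 <= aa j. Proof. by rewrite /aa subr_ge0 inv_le1. Qed.
Lemma aa_lt1 j : aa j < 1. Proof. by rewrite /aa ltrBlDr ltrDl inv_pos. Qed.
Lemma aa_mono j k : (j <= k)%N -> aa j <= aa k.
Proof.
move=> jk; rewrite /aa lerD2l lerN2 lef_pV2 ?posrE ?ltr0n // ler_nat; exact: jk.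
Qed.
Lemma aa_lt_lt j k : aa j < aa k -> (j < k)%N.
Proof. move=> h; rewrite ltnNge; apply/negP => /aa_mono; lra. Qed.
Lemma aa_big eps : 0 < eps -> exists j, 1 - eps < aa j.
Proof.
move=> e0; have [N HN] := @archi_inv eps e0; exists N; have := HN N (leqnn N); rewrite /aa.
set i := (_^-1); clearbody i; lra.
Qed.

Definition sgn (m : nat) : R := if odd m then -1 else 1.
Lemma sgn_norm m : `|sgn m| = 1. Proof. by rewrite /sgn; case: (odd m); rewrite ?normrN normr1. Qed.
Definition v m := (sgn m * aa m./2) *: e m./2.
Lemma v_norm m : `|v m| = aa m./2.
Proof. by rewrite /v normrZ he1 mulr1 normrM sgn_norm mul1r (ger0_norm (aa_ge0 _)). Qed.

Definition Mp p := xget 0%N [set m | 0 < tent m p].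
Definition F p := tent (Mp p) p *: v (Mp p).

Lemma tent0 m p : ~ 0 < tent m p -> tent m p = 0.
Proof. move=> h; apply/eqP; rewrite eq_le tent_ge0 andbT leNgt; exact/negP. Qed.

Lemma F_val m p : (forall m', m' <> m -> tent m' p = 0) -> F p = tent m p *: v m.
Proof.
move=> H; rewrite /F; have [ex|nex] := pselect (exists m', 0 < tent m' p).
  have h := xgetPex 0%N ex; rewrite -/(Mp p) in h *.
  case: (eqVneq (Mp p) m) => [->//|ne].
  by move: h; rewrite /= H ?ltxx //; exact/eqP.
have z0 : forall m', tent m' p = 0 by move=> m'; apply: tent0 => h; apply: nex; exists m'.
by rewrite !z0 !scale0r.
Qed.

Lemma F_form p : exists m, F p = tent m p *: v m /\ forall m', m' <> m -> tent m' p = 0.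
Proof.
have [[m hm]|nex] := pselect (exists m', 0 < tent m' p).
  have H : forall m', m' <> m -> tent m' p = 0.
    by move=> m' ne; apply: (tent_unique m m' p _ hm) => h; apply: ne; rewrite h.
  by exists m; split => //; exact: F_val.
have z0 : forall m', tent m' p = 0 by move=> m'; apply: tent0 => h; apply: nex; exists m'.
exists 0%N; split => //; exact: F_val.
Qed.

Lemma tsum m m' p q : m <> m' -> (forall k, k <> m' -> tent k q = 0) ->
  (forall k, k <> m -> tent k p = 0) -> tent m p + tent m' q <= d p q.
Proof.
move=> ne Hq Hp; have g1 := tent_ge0 m p; have g2 := tent_ge0 m' q.
case: (ltrP 0 (tent m p)) => h1; case: (ltrP 0 (tent m' q)) => h2.
- exact: tent_disj.
- have e2 : tent m' q = 0 by apply/eqP; rewrite eq_le h2 g2.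
  have e3 : tent m q = 0 by apply: Hq.
  have := tent_lip m p q; rewrite e3 subr0 ger0_norm // e2 addr0 //.
- have e1 : tent m p = 0 by apply/eqP; rewrite eq_le h1 g1.
  have e3 : tent m' p = 0 by apply: Hp => h; apply: ne.
  have := tent_lip m' p q; rewrite e3 sub0r normrN ger0_norm // e1 add0r //.
- have e1 : tent m p = 0 by apply/eqP; rewrite eq_le h1 g1.
  have e2 : tent m' q = 0 by apply/eqP; rewrite eq_le h2 g2.
  by rewrite e1 e2 addr0 d0.
Qed.

Lemma F_lip p q : `|F p - F q| <= d p q.
Proof.
have [m [-> Hp]] := F_form p; have [m' [-> Hq]] := F_form q.
case: (eqVneq m m') => [<-|ne].
  rewrite -scalerBl normrZ v_norm.
  have := tent_lip m p q; have := aa_lt1 m./2; have := aa_ge0 m./2.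
  have := normr_ge0 (tent m p - tent m q).
  set A := `|_|; set B := aa _; nra.
apply: le_trans (tsum _ _ _ _ (elimN eqP ne) Hq Hp).
apply: le_trans (ler_normB _ _) _.
rewrite (normrZ (tent m p)) (normrZ (tent m' q)) !v_norm !ger0_norm ?tent_ge0 //.
have := aa_lt1 m./2; have := aa_ge0 m./2; have := aa_lt1 m'./2; have := aa_ge0 m'./2.
have := tent_ge0 m p; have := tent_ge0 m' q.
set A := tent m p; set B := tent m' q; set C := aa m./2; set D := aa m'./2; nra.
Qed.

Definition NF (z : Y) := exists J K (al be : R), ((K < J)%N \/ be = 0) /\
  z = al *: e J + be *: e K /\ `|be| <= aa K /\ `|z| <= aa J.

Lemma nZ (c : R) i : `|(c * aa i) *: e i| = `|c| * aa i.
Proof. by rewrite normrZ he1 mulr1 normrM (ger0_norm (aa_ge0 i)). Qed.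

Lemma NF_two j k (c1 c2 : R) : `|c1| + `|c2| <= 1 -> NF ((c1 * aa j) *: e j + (c2 * aa k) *: e k).
Proof.
move=> hc; have n1 := normr_ge0 c1; have n2 := normr_ge0 c2.
have a1 := aa_ge0 j; have a2 := aa_ge0 k; have b1 := aa_lt1 j; have b2 := aa_lt1 k.
case: (ltngtP j k) => [jk|kj|jk].
- have m := aa_mono _ _ (ltnW jk).
  exists k, j, (c2 * aa k), (c1 * aa j); split; first by left.
  split; first by rewrite addrC.
  split; first by rewrite normrM (ger0_norm (aa_ge0 _)); nra.
  apply: le_trans (ler_normD _ _) _; rewrite !nZ; nra.
- have m := aa_mono _ _ (ltnW kj).
  exists j, k, (c1 * aa j), (c2 * aa k); split; first by left.
  split => //.
  split; first by rewrite normrM (ger0_norm (aa_ge0 _)); nra.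
  apply: le_trans (ler_normD _ _) _; rewrite !nZ; nra.
- subst k; exists j, j, ((c1 + c2) * aa j), 0; split; first by right.
  split; first by rewrite scale0r addr0 -scalerDl mulrDl.
  split; first by rewrite normr0.
  rewrite -scalerDl -mulrDl nZ; have := ler_normD c1 c2; nra.
Qed.

Lemma NF_Q p q : p <> q -> NF ((d p q)^-1 *: (F p - F q)).
Proof.
move=> pq; have Dp := dpos _ _ pq; set D := d p q in Dp *.
have [m [-> Hp]] := F_form p; have [m' [-> Hq]] := F_form q.
have t1 := tent_ge0 m p; have t2 := tent_ge0 m' q.
case: (eqVneq m m') => [<-|ne].
  have -> : D^-1 *: (tent m p *: v m - tent m q *: v m) =
      (((tent m p - tent m q) / D * sgn m) * aa m./2) *: e m./2 + (0 * aa m./2) *: e m./2.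
    rewrite mul0r scale0r addr0 /v -scalerBl !scalerA; congr (_ *: _); ring.
  have Di : 0 <= D^-1 by rewrite invr_ge0 ltW.
  apply: NF_two; rewrite normr0 addr0 normrM sgn_norm mulr1 normrM (ger0_norm Di).
  by rewrite ler_pdivrMr // mul1r; exact: tent_lip.
have hs := tsum _ _ _ _ (elimN eqP ne) Hq Hp.
have -> : D^-1 *: (tent m p *: v m - tent m' q *: v m') =
    ((tent m p / D * sgn m) * aa m./2) *: e m./2 + ((- (tent m' q / D) * sgn m') * aa m'./2) *: e m'./2.
  rewrite /v scalerBr !scalerA -scaleNr; congr (_ *: _ + _ *: _); ring.
have Di : 0 <= D^-1 by rewrite invr_ge0 ltW.
apply: NF_two; rewrite !normrM !sgn_norm !mulr1 normrN !normrM (ger0_norm Di) (ger0_norm t1) (ger0_norm t2).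
by rewrite -mulrDl ler_pdivrMr // mul1r.
Qed.

Lemma F_pair j : F (x j.*2) - F (x j.*2.+1) = (dd j * aa j) *: e j.
Proof.
rewrite (@F_val j.*2) ?(@F_val j.*2.+1).
- rewrite !tent_self rad_e rad_o /v /sgn /= odd_double half_double uphalf_double /=.
  rewrite !scalerA -scalerBl; congr (_ *: _); ring.
- by move=> m' ne; apply: tent_center => h; apply: ne.
- by move=> m' ne; apply: tent_center => h; apply: ne.
Qed.

Lemma F_pair_quot j : `|F (x j.*2) - F (x j.*2.+1)| / d (x j.*2) (x j.*2.+1) = aa j.
Proof.
have hdd := dd_pos j; rewrite F_pair nZ (ger0_norm (ltW hdd)) -/(dd j).
by rewrite mulrAC mulfV ?gt_eqF // mul1r.
Qed.

Lemma in_span2 J K J2 (al be : R) : ((K < J)%N \/ be = 0) -> (J < J2)%N ->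
  span e J2 (al *: e J + be *: e K).
Proof.
move=> hK hJ; apply: spanD; first exact: (@spanZ e _ al _) (span_el hJ).
case: hK => [hK|->]; first exact: (@spanZ e _ be _) (span_el (ltn_trans hK hJ)).
by rewrite scale0r; exact: span0.
Qed.

Lemma no_attain y : `|y| = 1 -> (forall del, 0 < del -> exists z, NF z /\ `|y - z| < del) -> False.
Proof.
move=> y1 H.
have approx : forall et N, 0 < et -> exists z J K al be, `|y - z| < et /\ (N < J)%N /\
    ((K < J)%N \/ be = 0) /\ z = al *: e J + be *: e K /\ `|be| <= aa K.
  move=> et N het.
  have hpos : 0 < Num.min et (1 - aa N) by rewrite lt_min het subr_gt0 aa_lt1.
  have [z [[J [K [al [be [hKJ [hz [hb hn]]]]]]] hyz]] := H _ hpos.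
  exists z, J, K, al, be; split.
    by apply: lt_le_trans hyz _; rewrite ge_min lexx.
  split => //.
  apply: aa_lt_lt.
  have h1 : `|y| <= `|y - z| + `|z| by have := ler_normD (y - z) z; rewrite subrK.
  have h2 : Num.min et (1 - aa N) <= 1 - aa N by rewrite ge_min lexx orbT.
  move: h1 h2 hyz hn; rewrite y1; set mm := Num.min _ _; clearbody mm.
  set A := `|y - z|; set B := `|z|; set C := aa N; set D := aa J; lra.
have step : forall et, 0 < et -> exists be K, `|be| <= aa K /\ `|y - be *: e K| < 5 * et.
  move=> et het.
  have [z1 [J1 [K1 [al1 [be1 [h1 [_ [hK1 [hz1 _]]]]]]]]] := approx et 0%N het.
  have [z2 [J2 [K2 [al2 [be2 [h2 [hJ [hK2 [hz2 hb2]]]]]]]]] := approx et J1 het.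
  exists be2, K2; split => //.
  have hw : span e J2 (be2 *: e K2 - z1).
    apply: spanB; last by rewrite hz1; exact: in_span2.
    by case: hK2 => [hK|->]; [exact: (@spanZ e _ be2 _) (span_el hK) | rewrite scale0r; exact: span0].
  have ha := heR _ al2 _ hw.
  have e1 : (y - z1) - (y - z2) = al2 *: e J2 + (be2 *: e K2 - z1).
    by rewrite opprB addrC addrA subrK hz2 addrA.
  rewrite -e1 in ha.
  have hb := ler_normB (y - z1) (y - z2).
  have e2 : y - be2 *: e K2 = (y - z2) + al2 *: e J2 by rewrite hz2 opprD addrA addrAC subrK.
  have hn : `|al2 *: e J2| = `|al2| by rewrite normrZ he1 mulr1.
  rewrite e2; apply: le_lt_trans (ler_normD _ _) _; rewrite hn.
  move: ha hb h1 h2; set A := `|y - z1|; set B := `|y - z2|; set C := `|al2|.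
  set D := `|_ - _|; lra.
have p100 : (0:R) < 1/100 by lra.
have [b1 [K1 [hb1 hy1]]] := step _ p100.
pose et := Num.min (1/100) ((1 - aa K1) / 5).
have het : 0 < et by rewrite lt_min p100 divr_gt0 // subr_gt0 aa_lt1.
have [b2 [K2 [hb2 hy2]]] := step et het.
have eta : et <= 1/100 by rewrite ge_min lexx.
have etb : et <= (1 - aa K1) / 5 by rewrite ge_min lexx orbT.
have nb2 : `|b2 *: e K2| = `|b2| by rewrite normrZ he1 mulr1.
have hyb : 1 <= `|y - b2 *: e K2| + `|b2|.
  by rewrite -y1 -nb2; have := ler_normD (y - b2 *: e K2) (b2 *: e K2); rewrite subrK.
have hK : (K1 < K2)%N.
  apply: aa_lt_lt; move: hyb hy2 etb hb2; clearbody et.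
  set A := `|y - _|; set B := `|b2|; set C := aa K1; set D := aa K2; lra.
have hw : span e K2 (- (b1 *: e K1)) by apply: spanN; exact: (@spanZ e _ b1 _) (span_el hK).
have ha := heR _ b2 _ hw.
have e3 : (y - b1 *: e K1) - (y - b2 *: e K2) = b2 *: e K2 - b1 *: e K1.
  by rewrite opprB addrC addrA subrK.
rewrite -e3 in ha; have hb := ler_normB (y - b1 *: e K1) (y - b2 *: e K2).
move: ha hb hy1 hy2 hyb eta; clearbody et.
set A := `|y - b1 *: e K1|; set B := `|y - b2 *: e K2|; set C := `|b2|; set D := `|_ - _|; lra.
Qed.

Lemma construct_main x0 : exists f : M -> Y, Lip0 d x0 f /\ ~ in_A d f.
Proof.
pose f p := F p - F x0.
have fd : forall p q, f p - f q = F p - F q by move=> p q; rewrite /f opprB addrA subrK.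
exists f; split.
  split; last by rewrite /f subrr.
  by exists 1 => p q; rewrite mul1r fd; exact: F_lip.
move=> [y [p [q [pq [cv ny]]]]].
have L1 : lipnorm d f = 1.
  rewrite /lipnorm; set S := [set t | _].
  have Sub : forall t, S t -> t <= 1.
    move=> t [p' [q' [pq' ->]]]; rewrite fd ler_pdivrMr; last exact: dpos _ _ pq'.
    by rewrite mul1r; exact: F_lip.
  have Sj : forall j, S (aa j).
    move=> j; exists (x j.*2), (x j.*2.+1); split.
      by move=> h; have := dd_pos j; rewrite /dd h dpp ltxx.
    by rewrite fd F_pair_quot.
  apply/eqP; rewrite eq_le; apply/andP; split.
    by apply: ge_sup; [exists (aa 0); exact: Sj 0 | move=> t; exact: Sub].
  apply/ler_addgt0Pr => eps e0; have [j hj] := aa_big _ e0.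
  have : aa j <= sup S by apply: ub_le_sup; [exists 1 => t; exact: Sub | exact: Sj].
  move: hj; set A := aa j; set B := sup S; lra.
apply: (no_attain y); first by rewrite ny L1.
move=> del hdel; have [N HN] := (cvgE_eps _ _).1 cv del hdel.
exists ((d (p N) (q N))^-1 *: (f (p N) - f (q N))); split; last exact: HN N (leqnn N).
rewrite fd; exact: NF_Q (pq N).
Qed.

End Construction.
Lemma infdim (M : Type) (d : M -> M -> R) (x0 : M) : is_metric d ->
  (exists x, pairly_distanced d x) -> ~ finite_dim Y ->
  exists f : M -> Y, Lip0 d x0 f /\ ~ in_A d f.
Proof.
move=> hd [x [inj [r [hr hpd]]]] nfd.
have [e [he1 heR]] := riesz_seq nfd.
exact: (construct_main M d x r e hd inj hr hpd he1 heR x0).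
Qed.
End Main.

Local Close Scope classical_set_scope.

Theorem theorem2p7 (R : realType) (Y : completeNormedModType R)
  (M : Type) (d : M -> M -> R) (x0 : M)
  (hd : is_metric d) (hcomplete : complete_metric d)
  (hpd : exists x : nat -> M, pairly_distanced d x) :
  (forall f : M -> Y, Lip0 d x0 f -> in_A d f) <-> finite_dim Y.
Proof.
split.
  move=> H; apply: contrapT => nfd.
  have [f [hf nA]] := @infdim R Y M d x0 hd hpd nfd.
  exact: nA (H f hf).
move=> fd f [hl _].
have [x [inj _]] := hpd.
apply: (@fd_attain R Y M d f hd _ fd hl).
by exists (x 0%N), (x 1%N) => h; have := inj _ _ h.
Qed.
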